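(* With $\omega>0$, $c\in[0,1]$, $h>0$ satisfying the stability condition and $\rho(c,\omega,h)$ as in Proposition 9.3, one has $$\rho(c,\omega,h)=\frac12\,\frac{h^4r^2}{(1+\omega^{-2})(1+\omega^{-2}-h^2r)},$$ where $$r=r(c,\omega,h)=\tfrac14(1-c^2+\omega^{-2})^2+c^2(1-c^2+\omega^{-2})R(ch),\qquad R(\zeta)=\frac{1-\zeta\cot\zeta}{\zeta^2}.$$
   Context: Setting of Proposition 9.3: $H=\frac12\omega^{-2}p^2+\frac12(\omega^2+1)q^2$; $\psi_h=\varphi^{(B)}_{h/2}\circ\varphi^{(A)}_h\circ\varphi^{(B)}_{h/2}$ with $(A)$: $\dot q=\omega^{-2}p,\dot p=-c^2\omega^2q$ and $(B)$: $\dot q=0,\dot p=-((1-c^2)\omega^2+1)q$; stability: $ch+2\arctan(h(1+(1-c^2)\omega^2)/(2c\omega^2))<\pi$ ($c>0$), $h<2\omega/\sqrt{1+\omega^2}$ ($c=0$); $\cos\theta_h=\frac12\operatorname{trace}$ of the one-step matrix; $\chi_h=\sin(ch)/(c\omega^2\sin\theta_h)$ ($c>0$) or $h/(\omega^2\sin\theta_h)$ ($c=0$); $\hat\chi_h^2=(\omega^2+\omega^4)\chi_h^2$; $\rho=\frac12(\hat\chi_h^2+\hat\chi_h^{-2}-2)$. For $c=0$ the term involving $R$ is absent (multiplied by $c^2=0$). *)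

(* Defs.v *)
From Stdlib Require Import Reals.
Open Scope R_scope.

(* Exact flow of (A): q' = w^-2 p, p' = - c^2 w^2 q, over time t.
   For c > 0 this is the harmonic oscillator of frequency c; for c = 0
   it is the free flow q(t) = q + t w^-2 p, p(t) = p. *)
Definition flowA (c w t : R) (x : R * R) : R * R :=
  let (q, p) := x in
  if Req_dec_T c 0 then (q + t * p / w ^ 2, p)
  else (cos (c * t) * q + sin (c * t) / (c * w ^ 2) * p,
        - c * w ^ 2 * sin (c * t) * q + cos (c * t) * p).

(* Exact flow of (B): q' = 0, p' = -((1 - c^2) w^2 + 1) q. *)
Definition flowB (c w t : R) (x : R * R) : R * R :=
  let (q, p) := x in (q, p - t * ((1 - c ^ 2) * w ^ 2 + 1) * q).

Definition psi (c w h : R) (x : R * R) : R * R :=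
  flowB c w (h / 2) (flowA c w h (flowB c w (h / 2) x)).

(* Trace of the (linear) one-step map: M11 + M22. *)
Definition trace_psi (c w h : R) : R :=
  fst (psi c w h (1, 0)) + snd (psi c w h (0, 1)).

Definition theta (c w h : R) : R := acos (trace_psi c w h / 2).

Definition chi (c w h : R) : R :=
  if Req_dec_T c 0 then h / (w ^ 2 * sin (theta c w h))
  else sin (c * h) / (c * w ^ 2 * sin (theta c w h)).

Definition chihat2 (c w h : R) : R := (w ^ 2 + w ^ 4) * (chi c w h) ^ 2.

Definition rho (c w h : R) : R :=
  / 2 * (chihat2 c w h + / chihat2 c w h - 2).

Definition stable (c w h : R) : Prop :=
  (0 < c -> c * h + 2 * atan (h * (1 + (1 - c ^ 2) * w ^ 2) / (2 * c * w ^ 2)) < PI)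
  /\ (c = 0 -> h < 2 * w / sqrt (1 + w ^ 2)).

Definition cot (z : R) : R := cos z / sin z.

Definition Rfun (z : R) : R := (1 - z * cot z) / z ^ 2.

(* r(c, w, h); for c = 0 the R-term is multiplied by c^2 = 0 and vanishes. *)
Definition rr (c w h : R) : R :=
  / 4 * (1 - c ^ 2 + / w ^ 2) ^ 2 + c ^ 2 * (1 - c ^ 2 + / w ^ 2) * Rfun (c * h).

(* Main.v *)
Require Import Defs.
From Stdlib Require Import Reals Lra Psatz.
Open Scope R_scope.

Lemma sin_acos_sq (T : R) : -1 < T < 1 ->
  (sin (acos T)) ^ 2 = 1 - T ^ 2 /\ sin (acos T) <> 0.
Proof.
  intros HT. rewrite sin_acos by lra.
  assert (H0 : 0 < 1 - T²) by (unfold Rsqr; nra).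
  split.
  - rewrite <- Rsqr_pow2, Rsqr_sqrt by lra. unfold Rsqr; ring.
  - apply Rgt_not_eq, sqrt_lt_R0; lra.
Qed.

Lemma trace_pos (c w h : R) : c <> 0 -> w <> 0 ->
  trace_psi c w h = 2 * cos (c * h) - h * ((1 - c ^ 2) * w ^ 2 + 1) * sin (c * h) / (c * w ^ 2).
Proof.
  intros Hc Hw. unfold trace_psi, psi, flowA, flowB.
  destruct (Req_dec_T c 0) as [e|_]; [contradiction|]. simpl. field. auto.
Qed.

Lemma trace_zero (w h : R) : w <> 0 ->
  trace_psi 0 w h = 2 - h * h * ((1 - 0 ^ 2) * w ^ 2 + 1) / w ^ 2.
Proof.
  intros Hw. unfold trace_psi, psi, flowA, flowB.
  destruct (Req_dec_T 0 0) as [_|n]; [|contradiction]. simpl. field. auto.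
Qed.

Theorem proposition9p4 (c w h : R) :
  0 < w -> 0 <= c <= 1 -> 0 < h -> stable c w h ->
  rho c w h =
    / 2 * (h ^ 4 * (rr c w h) ^ 2 /
           ((1 + / w ^ 2) * (1 + / w ^ 2 - h ^ 2 * rr c w h))).
Proof.
  intros Hw Hc Hh [Sp S0].
  assert (Hw0 : w <> 0) by lra.
  assert (Hw2 : 0 < w ^ 2) by (apply pow_lt; lra).
  assert (Hu : 0 < 1 + / w ^ 2) by (assert (0 < / w ^ 2) by (apply Rinv_0_lt_compat; lra); lra).
  set (u := 1 + / w ^ 2) in *.
  set (D := u - h ^ 2 * rr c w h).
  assert (KEY : 0 < D /\ chihat2 c w h = u / D).
  { unfold theta in *. destruct (Req_dec c 0) as [E|Hc0].
    - subst c. specialize (S0 eq_refl).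
      pose proof (trace_zero w h Hw0) as Tr.
      set (T := trace_psi 0 w h / 2).
      assert (HT : T = 1 - h ^ 2 * u / 2) by (unfold T, u; rewrite Tr; field; auto).
      assert (Hs : 0 < sqrt (1 + w ^ 2)) by (apply sqrt_lt_R0; lra).
      assert (Hsq : sqrt (1 + w ^ 2) ^ 2 = 1 + w ^ 2)
        by (rewrite <- Rsqr_pow2, Rsqr_sqrt by lra; reflexivity).
      assert (Hh2 : h * sqrt (1 + w ^ 2) < 2 * w).
      { apply (Rmult_lt_compat_r (sqrt (1 + w ^ 2))) in S0; auto.
        replace (2 * w / sqrt (1 + w ^ 2) * sqrt (1 + w ^ 2)) with (2 * w) in S0 by (field; lra). lra. }
      assert (Hh3 : h ^ 2 * (1 + w ^ 2) < 4 * w ^ 2).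
      { rewrite <- Hsq. assert (0 < h * sqrt (1 + w ^ 2)) by nra. nra. }
      assert (Hu2 : u * w ^ 2 = 1 + w ^ 2) by (unfold u; field; auto).
      assert (Hhu : h ^ 2 * u < 4).
      { apply (Rmult_lt_reg_r (w ^ 2)); auto. nra. }
      assert (Hp : 0 < h ^ 2 * u) by (apply Rmult_lt_0_compat; auto; apply pow_lt; lra).
      assert (HT1 : -1 < T < 1) by (rewrite HT; lra).
      destruct (sin_acos_sq T HT1) as [S2 Sn].
      assert (HD : D = u - h ^ 2 * u ^ 2 / 4).
      { unfold D, rr. replace (1 - 0 ^ 2 + / w ^ 2) with u by (unfold u; ring). rewrite pow_i by lia. field. }
      assert (HD2 : 1 - T ^ 2 = h ^ 2 * D). { rewrite HD, HT. field. }
      assert (HTp : 0 < 1 - T ^ 2) by nra.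
      assert (Hh0 : 0 < h ^ 2) by (apply pow_lt; lra).
      split. { rewrite HD2 in HTp. nra. }
      unfold chihat2, chi, theta. destruct (Req_dec_T 0 0) as [_|n]; [|contradiction].
      fold T. set (S := sin (acos T)) in *.
      replace ((h / (w ^ 2 * S)) ^ 2) with (h ^ 2 / (w ^ 4 * S ^ 2)) by (field; auto).
      rewrite S2, HD2. assert (0 < D) by (rewrite HD2 in HTp; nra).
      unfold u. field. split; lra.
    - assert (Hcp : 0 < c) by lra. specialize (Sp Hcp).
      pose proof (trace_pos c w h Hc0 Hw0) as Tr.
      set (T := trace_psi c w h / 2).
      set (a := (1 - c ^ 2) * w ^ 2 + 1).
      assert (Ha : 0 < a) by (unfold a; assert (0 <= 1 - c ^ 2) by nra; nra).
      set (y := h * (1 + (1 - c ^ 2) * w ^ 2) / (2 * c * w ^ 2)) in *.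
      assert (Hy : y = h * a / (2 * c * w ^ 2)) by (unfold y, a; f_equal; ring).
      assert (Hyp : 0 < y).
      { rewrite Hy. apply Rdiv_lt_0_compat; [nra|]. nra. }
      set (f := atan y) in *.
      destruct (atan_bound y) as [fb1 fb2]. fold f in fb1, fb2.
      assert (Hf0 : 0 < f) by (unfold f; rewrite <- atan_0; apply atan_increasing; auto).
      assert (Hcf : 0 < cos f) by (apply cos_gt_0; lra).
      assert (Htf : sin f / cos f = y) by (pose proof (tan_atan y) as tt; unfold tan in tt; exact tt).
      assert (Hch : 0 < c * h) by nra.
      assert (Hs : 0 < sin (c * h)) by (apply sin_gt_0; lra).
      assert (HT : T = cos (c * h + f) / cos f).
      { unfold T. rewrite Tr, cos_plus.
        replace (sin f) with (y * cos f) by (rewrite <- Htf; field; lra).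
        rewrite Hy. fold a. field. split; lra. }
      assert (Hc1 : cos (c * h + f) < cos f) by (apply cos_decreasing_1; lra).
      assert (Hc2 : cos (PI - f) < cos (c * h + f)) by (apply cos_decreasing_1; lra).
      rewrite cos_minus, cos_PI, sin_PI in Hc2.
      assert (HT1 : -1 < T < 1).
      { rewrite HT. split.
        - apply (Rmult_lt_reg_r (cos f)); auto. unfold Rdiv. rewrite Rmult_assoc, Rinv_l by lra. lra.
        - apply (Rmult_lt_reg_r (cos f)); auto. unfold Rdiv. rewrite Rmult_assoc, Rinv_l by lra. lra. }
      destruct (sin_acos_sq T HT1) as [S2 Sn].
      assert (HD2 : 1 - T ^ 2 = sin (c * h) ^ 2 / c ^ 2 * D).
      { replace (1 - T ^ 2) with (sin (c * h) ^ 2 + cos (c * h) ^ 2 - T ^ 2)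
          by (rewrite <- !Rsqr_pow2, sin2_cos2; ring).
        unfold T. rewrite Tr. unfold D, rr, Rfun, cot, u. field.
        repeat split; lra. }
      assert (HTp : 0 < 1 - T ^ 2) by nra.
      assert (HDp : 0 < D).
      { rewrite HD2 in HTp. assert (0 < sin (c * h) ^ 2 / c ^ 2)
          by (apply Rdiv_lt_0_compat; apply pow_lt; lra). nra. }
      split; auto.
      unfold chihat2, chi, theta. destruct (Req_dec_T c 0) as [e|_]; [contradiction|].
      fold T. set (S := sin (acos T)) in *.
      replace ((sin (c * h) / (c * w ^ 2 * S)) ^ 2) with (sin (c * h) ^ 2 / (c ^ 2 * w ^ 4 * S ^ 2))
        by (field; repeat split; lra).
      rewrite S2, HD2. unfold u. field. repeat split; lra. }
  destruct KEY as [HD HX].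
  unfold rho. rewrite HX. fold D.
  replace (1 + / w ^ 2 - h ^ 2 * rr c w h) with D by reflexivity.
  unfold D in *. field. repeat split; lra.
Qed.
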